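(* Let $f:\mathbb{R}^n\to(-\infty,+\infty]$ be proper and lower semicontinuous with $\bar x\in\operatorname{dom}f$, and let $g:\mathbb{R}^n\to(-\infty,+\infty]$ be convex and continuously differentiable on a neighborhood of $\bar x$. If $f$ is variationally convex at $\bar x$ for $\bar v\in\partial f(\bar x)$, then $f+g$ is variationally convex at $\bar x$ for $\bar v+\nabla g(\bar x)\in\partial(f+g)(\bar x)$.
   Context: $\partial$ is the limiting (Mordukhovich) subdifferential. A lsc $h$ is variationally convex at $\bar x$ for $\bar v\in\partial h(\bar x)$ if for some convex neighborhood $U\times V$ of $(\bar x,\bar v)$ there are a lsc convex function $\varphi\le h$ on $U$ and $\varepsilon>0$ such that $[U_\varepsilon\times V]\cap\operatorname{gph}\partial h=[U\times V]\cap\operatorname{gph}\partial\varphi$ and $h(x)=\varphi(x)$ at the common elements $(x,v)$, where $U_\varepsilon=\{x\in U:h(x)<h(\bar x)+\varepsilon\}$. *)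

(* Defs.v *)
From HB Require Import structures.
From mathcomp Require Import all_boot all_order all_algebra.
From mathcomp Require Import all_classical all_reals all_analysis.
Set Implicit Arguments. Unset Strict Implicit. Unset Printing Implicit Defensive.
Import Order.TTheory GRing.Theory Num.Theory.
Import numFieldNormedType.Exports.
Local Open Scope classical_set_scope.
Local Open Scope ring_scope.

Section VarConv.
Variables (R : realType) (n : nat).
Notation V := 'rV[R]_n.

Definition inner (u v : V) : R := \sum_(i < n) u 0 i * v 0 i.

Definition proper_fun (h : V -> \bar R) : Prop :=
  (forall x, h x != -oo%E) /\ exists x, h x \is a fin_num.

Definition lsc (h : V -> \bar R) : Prop :=
  forall x (a : R), (a%:E < h x)%E -> \forall y \near x, (a%:E < h y)%E.

Definition convex_fun (h : V -> \bar R) : Prop :=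
  (forall x, h x != -oo%E) /\
  forall (x y : V) (t : R), 0 < t < 1 ->
    (h (t *: x + (1 - t) *: y)%R <= t%:E * h x + (1 - t)%:E * h y)%E.

Definition convex_set (U : set V) : Prop :=
  forall (x y : V) (t : R), U x -> U y -> 0 <= t <= 1 -> U (t *: x + (1 - t) *: y).

Definition frechet_subgrad (h : V -> \bar R) (x v : V) : Prop :=
  h x \is a fin_num /\
  forall eps : R, 0 < eps -> \forall y \near x,
    (h x + (inner v (y - x) - eps * `|y - x|)%:E <= h y)%E.

Definition lim_subgrad (h : V -> \bar R) (x v : V) : Prop :=
  h x \is a fin_num /\
  exists (xs vs : nat -> V),
    xs @ \oo --> x /\ (fun k => h (xs k)) @ \oo --> h x /\
    vs @ \oo --> v /\ forall k, frechet_subgrad h (xs k) (vs k).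

Definition C1_on_with_grad (U : set V) (g : V -> \bar R) (G : V -> V) : Prop :=
  (forall x, U x -> g x \is a fin_num) /\
  (forall x, U x -> forall eps : R, 0 < eps -> \forall y \near x,
     `|fine (g y) - fine (g x) - inner (G x) (y - x)| <= eps * `|y - x|) /\
  (forall x, U x -> {for x, continuous G}).

Definition var_convex (h : V -> \bar R) (xbar vbar : V) : Prop :=
  lim_subgrad h xbar vbar /\
  exists (U W : set V) (phi : V -> \bar R) (eps : R),
    convex_set U /\ convex_set W /\ nbhs xbar U /\ nbhs vbar W /\
    lsc phi /\ convex_fun phi /\ (forall x, U x -> (phi x <= h x)%E) /\
    0 < eps /\
    (forall x v,
       (U x /\ (h x < h xbar + eps%:E)%E /\ W v /\ lim_subgrad h x v) <->
       (U x /\ W v /\ lim_subgrad phi x v)) /\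
    (forall x v, U x -> W v -> lim_subgrad phi x v -> h x = phi x).

End VarConv.

(* Main.v *)
Require Import Defs.
From HB Require Import structures.
From mathcomp Require Import all_boot all_order all_algebra.
From mathcomp Require Import all_classical all_reals all_analysis.
From mathcomp Require Import ring lra.
Import Order.TTheory GRing.Theory Num.Theory.
Import numFieldNormedType.Exports.
Local Open Scope classical_set_scope.
Local Open Scope ring_scope.

Section Aux.
Variables (R : realType) (n : nat).
Notation V := 'rV[R]_n.

Lemma entry_le (u : V) (i : 'I_n) : `|u 0 i| <= `|u|.
Proof.
rewrite [leRHS]/Num.norm /= mx_normrE; apply/bigmax_geP; right => /=.
by exists (0, i).
Qed.

Lemma inner_bound (u v : V) : `|inner u v| <= n%:R * (`|u| * `|v|).
Proof.
rewrite /inner; apply: le_trans (ler_norm_sum _ _ _) _.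
rewrite (_ : n%:R * _ = \sum_(i < n) (`|u| * `|v|)); last first.
  by rewrite sumr_const card_ord mulr_natl.
apply: ler_sum => i _; rewrite normrM; apply: ler_pM => //; exact: entry_le.
Qed.

Lemma innerDl (a b c : V) : inner (a + b) c = inner a c + inner b c.
Proof. by rewrite /inner -big_split; apply: eq_bigr => i _; rewrite !mxE mulrDl. Qed.
Lemma innerDr (a b c : V) : inner a (b + c) = inner a b + inner a c.
Proof. by rewrite /inner -big_split; apply: eq_bigr => i _; rewrite !mxE mulrDr. Qed.
Lemma innerNl (a c : V) : inner (- a) c = - inner a c.
Proof. by rewrite /inner -sumrN; apply: eq_bigr => i _; rewrite !mxE mulNr. Qed.
Lemma innerNr (a c : V) : inner a (- c) = - inner a c.
Proof. by rewrite /inner -sumrN; apply: eq_bigr => i _; rewrite !mxE mulrN. Qed.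
Lemma innerZr (a c : V) t : inner a (t *: c) = t * inner a c.
Proof. by rewrite /inner mulr_sumr; apply: eq_bigr => i _; rewrite !mxE mulrCA. Qed.
Lemma inner0r (a : V) : inner a 0 = 0.
Proof. by rewrite /inner big1 // => i _; rewrite mxE mulr0. Qed.

Lemma inner_cvg {T} (F : set_system T) {FF : Filter F} (u z : T -> V) a b :
  u @ F --> a -> z @ F --> b -> (fun t => inner (u t) (z t)) @ F --> inner a b.
Proof.
move=> hu hz; rewrite /inner.
apply: (@cvg_big _ _ +%R 0 xpredT add_continuous) => // i _.
apply: cvgM.
  exact: (cvg_comp _ _ hu (@coord_continuous _ 1 n 0 i a)).
exact: (cvg_comp _ _ hz (@coord_continuous _ 1 n 0 i b)).
Qed.

Local Open Scope ereal_scope.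

Definition diff_at (c : V -> \bar R) (D : V) (y : V) :=
  forall eps : R, (0 < eps)%R -> \forall z \near y,
     (`|fine (c z) - fine (c y) - inner D (z - y)| <= eps * `|z - y|)%R.

Lemma near_norm (y : V) (d : R) : (0 < d)%R -> \forall z \near y, (`|z - y| < d)%R.
Proof.
move=> d0; apply/nbhs_ballP; exists d => // z; rewrite -ball_normE /= distrC //.
Qed.

Lemma diff_cont (c : V -> \bar R) (D : V) (y : V) : c y \is a fin_num -> (\forall z \near y, c z \is a fin_num) ->
  diff_at c D y -> c z @[z --> y] --> c y.
Proof.
move=> cy hc hd.
suff H : (fun z => fine (c z)) @ y --> fine (c y).
  rewrite -(fineK cy); exact: (cvg_EFin hc H).
apply/(@cvgrPdist_lt _ _ _ (nbhs y) (nbhs_filter y)) => e e0.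
have K0 : (0 < 1 + n%:R * `|D|)%R by rewrite ltr_pwDl // mulr_ge0.
have hd1 := hd 1%R ltr01.
near=> z.
have h1 : (`|fine (c z) - fine (c y) - inner D (z - y)| <= 1 * `|z - y|)%R by near: z.
have h2 : (`|z - y| < e / (1 + n%:R * `|D|))%R.
  by near: z; apply: near_norm; rewrite divr_gt0.
have h3 := inner_bound D (z - y).
rewrite ltr_pdivlMr // in h2.
rewrite /= distrC.
have h4 : (`|fine (c z) - fine (c y)| <= `|fine (c z) - fine (c y) - inner D (z - y)| + `|inner D (z - y)|)%R.
  by rewrite (le_trans _ (ler_normD _ _)) // subrK.
have h5 : (0 <= `|z - y|)%R by [].
have h6 : (0 <= `|D|)%R by [].
have h7 : (0 <= n%:R :> R)%R by [].
nra.
Unshelve. all: by end_near.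
Qed.

Arguments diff_cont {c D y}.

Lemma frechet_add (k k' c : V -> \bar R) (D : V) y w :
  (\forall z \near y, k' z = k z + c z) -> c y \is a fin_num ->
  (\forall z \near y, c z \is a fin_num) -> diff_at c D y ->
  frechet_subgrad k y w -> frechet_subgrad k' y (w + D).
Proof.
move=> hk' cy hc hd [ky hf].
have k'y : k' y = k y + c y := nbhs_singleton hk'.
split; first by rewrite k'y fin_numD ky cy.
move=> e e0; have e2 : (0 < e / 2)%R by rewrite divr_gt0.
near=> z.
have h1 : k y + (inner w (z - y) - e / 2 * `|z - y|)%:E <= k z by near: z; exact: hf.
have h2 : (`|fine (c z) - fine (c y) - inner D (z - y)| <= e / 2 * `|z - y|)%R.
  by near: z; exact: hd.
have hcz : c z \is a fin_num by near: z.
have -> : k' z = k z + c z by near: z.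
rewrite k'y -(fineK ky) -(fineK cy) -(fineK hcz) in h1 *.
move: h1; case: (k z) => [r||] //=; last by move=> _; rewrite leey.
rewrite -!EFinD !lee_fin innerDl => h1.
move: h2; rewrite ler_norml => /andP[h2 h3].
lra.
Unshelve. all: by end_near.
Qed.


Lemma open_near (S : set V) y : open S -> S y -> \forall z \near y, S z.
Proof. by move=> So Sy; apply: open_nbhs_nbhs; split. Qed.
Arguments open_near {S y}.

Lemma lim_transfer (k k' c : V -> \bar R) (D : V -> V) (S : set V) x w v :
  open S -> S x -> (forall y, S y -> k' y = k y + c y) ->
  (forall y, S y -> c y \is a fin_num) -> (forall y, S y -> diff_at c (D y) y) ->
  {for x, continuous D} -> v = (w + D x)%R ->
  lim_subgrad k x w -> lim_subgrad k' x v.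
Proof.
move=> So Sx hk hc hd hD -> [kx [xs [vs [hx [hkv [hv hF]]]]]].
have [N _ HN] : \forall m \near \oo, S (xs m) := hx _ (open_near So Sx).
have cx : c x \is a fin_num := hc x Sx.
have ccont := diff_cont cx (filterS hc (open_near So Sx)) (hd x Sx).
have hxs : (fun m => xs (m + N)%N) @ \oo --> x by rewrite (cvg_shiftn N xs).
split; first by rewrite hk // fin_numD kx cx.
exists (fun m => xs (m + N)%N), (fun m => vs (m + N)%N + D (xs (m + N)%N))%R.
split; first exact: hxs.
split.
  have -> : (fun m => k' (xs (m + N)%N)) = (fun m => k (xs (m + N)%N) + c (xs (m + N)%N)).
    by apply/funext => m; rewrite hk //; apply: HN; exact: leq_addl.
  rewrite hk //; apply: cvgeD; first exact: fin_num_adde_defl.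
    by rewrite (cvg_shiftn N (fun m => k (xs m))).
  exact: (cvg_comp _ _ hxs (ccont (nbhs_filter x))).
split.
  apply: cvgD; first by rewrite (cvg_shiftn N vs).
  exact: (cvg_comp _ _ hxs hD).
move=> m; have Sm : S (xs (m + N)%N) by apply: HN; exact: leq_addl.
apply: (@frechet_add k k' c) => //.
- exact: filterS (fun z Sz => hk z Sz) (open_near So Sm).
- exact: hc.
- exact: filterS hc (open_near So Sm).
- exact: hd.
Qed.

Lemma convex_frechet (phi : V -> \bar R) x y v : convex_fun phi ->
  frechet_subgrad phi x v -> phi y \is a fin_num ->
  (fine (phi x) + inner v (y - x) <= fine (phi y))%R.
Proof.
move=> [pninf pconv] [px hf] py.
set a := fine (phi x); set b := fine (phi y); set d := `|y - x|%R.
have d0 : (0 <= d)%R by exact: normr_ge0.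
apply/ler_addgt0Pr => e e0.
set eps := (e / (d + 1))%R.
have eps0 : (0 < eps)%R by rewrite divr_gt0 // ltr_wpDl.
have epsd : (eps * d <= e)%R.
  rewrite /eps mulrAC ler_pdivrMr ?ltr_wpDl //; nra.
have [δ /= δ0 Hδ] := (nbhs_ballP _ _).1 (hf eps eps0).
set t := (δ / (2 * (d + δ)))%R.
have dd0 : (0 < 2 * (d + δ))%R by nra.
have t0 : (0 < t)%R by rewrite divr_gt0.
have t1 : (t < 1)%R.
  by rewrite /t ltr_pdivrMr //; nra.
set z := (t *: y + (1 - t) *: x)%R.
have zx : (z - x = t *: (y - x))%R.
  by apply/rowP => i; rewrite /z !mxE; ring.
have hz : ball x δ z.
  rewrite -ball_normE /= distrC zx normrZ gtr0_norm //.
  rewrite /t mulrAC ltr_pdivrMr // -/d; nra.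
have h1 := Hδ z hz.
have h2 := pconv y x t (andb_true_intro (conj t0 t1)).
rewrite /= zx innerZr normrZ gtr0_norm // in h1.
rewrite -/z -(fineK px) -(fineK py) -/a -/b in h1 h2.
have h3 := le_trans h1 h2.
rewrite -!EFinM -!EFinD lee_fin in h3.
rewrite -/d in h3.
have h4 : (t * (a + inner v (y - x) - eps * d - b) <= 0)%R by lra.
rewrite pmulr_rle0 // in h4.
lra.
Qed.


Lemma convex_lim (phi : V -> \bar R) x y w : convex_fun phi ->
  lim_subgrad phi x w -> phi y \is a fin_num ->
  (fine (phi x) + inner w (y - x) <= fine (phi y))%R.
Proof.
move=> cphi [px [xs [vs [hx [hp [hv hF]]]]]] py.
have hu : (fun m => fine (phi (xs m)) + inner (vs m) (y - xs m))%R @ \oo -->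
          (fine (phi x) + inner w (y - x))%R.
  apply: cvgD.
    apply: fine_cvg; rewrite fineK //.
  apply: inner_cvg => //; apply: cvgB => //; exact: cvg_cst.
rewrite -(cvg_lim _ hu) //; apply: limr_le; first exact: (cvgP _ hu).
near=> m; exact: convex_frechet.
Unshelve. all: by end_near.
Qed.

Lemma contN {D : V -> V} {x} : {for x, continuous D} -> {for x, continuous (fun y => - D y)%R}.
Proof.
move=> hD; exact: (@cvgN _ _ _ (nbhs x) (nbhs_filter x) D (D x) hD).
Qed.

Lemma diff_at_N (c : V -> \bar R) D y : diff_at c D y -> diff_at (fun z => - c z) (- D)%R y.
Proof.
move=> hd e e0; apply: filterS (hd e e0) => z.
have E : forall a b d : R, (- a - - b - - d = - (a - b - d))%R by move=> *; ring.
by rewrite !fineN innerNl E normrN.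
Qed.

Lemma lim_transfer_neg (k c : V -> \bar R) (D : V -> V) (S : set V) x v :
  open S -> S x ->
  (forall y, S y -> c y \is a fin_num) -> (forall y, S y -> diff_at c (D y) y) ->
  {for x, continuous D} ->
  lim_subgrad (fun y => k y + c y) x v -> lim_subgrad k x (v - D x)%R.
Proof.
move=> So Sx hc hd hD.
have h1 : forall y, S y -> k y = (k y + c y) + (- c y).
  by move=> y Sy; rewrite addeK // hc.
have h2 : forall y, S y -> (- c y) \is a fin_num.
  by move=> y Sy; rewrite fin_numN hc.
have h3 : forall y, S y -> diff_at (fun z => - c z) (- D y)%R y.
  by move=> y Sy; apply: diff_at_N; apply: hd.
have := (@lim_transfer (fun y => (k y + c y)%E) k (fun y => (- c y)%E) (fun y => - D y)%R S x v (v - D x)%R So Sx).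
by move=> /(_ h1 h2 h3 (contN hD) erefl).
Qed.

Lemma addNy_neq (a b : \bar R) : a != -oo -> b != -oo -> a + b != -oo.
Proof. by case: a => [a||] //; case: b => [b||]. Qed.

Lemma mulpos_nNy (t : R) (a : \bar R) : (0 < t)%R -> a != -oo -> t%:E * a != -oo.
Proof. by move=> t0; case: a => [a||] //= _; rewrite mulry gtr0_sg // mul1e. Qed.

Lemma mulpos_y (t : R) : (0 < t)%R -> t%:E * +oo = +oo.
Proof. by move=> t0; rewrite mulry gtr0_sg // mul1e. Qed.

Lemma adde_def_nNy (a b : \bar R) : a != -oo -> b != -oo -> a +? b.
Proof. by case: a => [a||] //; case: b => [b||]. Qed.

Lemma comb (t : R) (a b c d : \bar R) : a != -oo -> b != -oo -> c != -oo -> d != -oo ->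
  t%:E * a + (1 - t)%:E * b + (t%:E * c + (1 - t)%:E * d) =
  t%:E * (a + c) + (1 - t)%:E * (b + d).
Proof.
move=> ha hb hc hd.
by rewrite !muleDr ?adde_def_nNy // addeACA.
Qed.

Lemma comb_norm (x y c : V) (t : R) :
  (x - c = t *: (y - c) + (1 - t) *: (x - c) - t *: (y - c) - (1 - t) *: (x - c) + (x - c))%R.
Proof. by apply/rowP => i; rewrite !mxE; ring. Qed.

Lemma comb_diff (x y c : V) (t : R) :
  (t *: x + (1 - t) *: y - c = t *: (x - c) + (1 - t) *: (y - c))%R.
Proof. by apply/rowP => i; rewrite !mxE; ring. Qed.

Lemma comb_le (x y c : V) (t : R) : (0 <= t <= 1)%R ->
  (`|t *: x + (1 - t) *: y - c| <= t * `|x - c| + (1 - t) * `|y - c|)%R.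
Proof.
move=> /andP[t0 t1]; rewrite comb_diff.
apply: le_trans (ler_normD _ _) _.
by rewrite !normrZ (ger0_norm t0) ger0_norm // subr_ge0.
Qed.

Lemma ball_convex (c : V) (r : R) : Defs.convex_set [set z | `|z - c| < r]%R.
Proof.
move=> x y t /= hx hy ht; apply: le_lt_trans (comb_le _ _ _ _ ht) _.
move: ht => /andP[t0 t1].
have [AB|AB] := leP `|x - c|%R `|y - c|%R; nra.
Qed.

Definition cutf (phi g : V -> \bar R) (c : V) (r : R) : V -> \bar R :=
  fun y => if (`|y - c| <= r)%R then phi y + g y else +oo.

Lemma cut_convex phi g c r : convex_fun phi -> convex_fun g -> convex_fun (cutf phi g c r).
Proof.
move=> [pn pc] [gn gc]; split.
  by move=> y; rewrite /cutf; case: ifP => _ //; exact: addNy_neq.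
have cutn : forall y, cutf phi g c r y != -oo.
  by move=> y; rewrite /cutf; case: ifP => _ //; exact: addNy_neq.
move=> x y t /andP[t0 t1].
have t1' : (0 < 1 - t)%R by rewrite subr_gt0.
case hx: (`|x - c| <= r)%R; last first.
  by rewrite [cutf _ _ _ _ x]/cutf hx mulpos_y // addye ?leey // mulpos_nNy.
case hy: (`|y - c| <= r)%R; last first.
  by rewrite [cutf _ _ _ _ y]/cutf hy mulpos_y // addey ?leey // mulpos_nNy.
have hz : (`|t *: x + (1 - t) *: y - c| <= r)%R.
  have ht : (0 <= t <= 1)%R by rewrite (ltW t0) (ltW t1).
  apply: le_trans (comb_le x y c t ht) _.
  nra.
rewrite /cutf hx hy hz -comb //.
by apply: leeD; [apply: pc | apply: gc]; rewrite t0 t1.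
Qed.

Lemma cut_lsc phi g c r : lsc phi ->
  (forall y, (`|y - c| <= r)%R -> g y \is a fin_num /\ g z @[z --> y] --> g y) ->
  lsc (cutf phi g c r).
Proof.
move=> hphi hg y a; rewrite {1}/cutf; case: ifPn => hy ha; last first.
  rewrite -ltNge in hy.
  have d0 : (0 < `|y - c| - r)%R by rewrite subr_gt0.
  near=> z.
  have h1 : (`|z - y| < `|y - c| - r)%R by near: z; exact: near_norm.
  have h2 := ler_distD z y c.
  have h3 : ~~ (`|z - c| <= r)%R.
    rewrite -ltNge; rewrite distrC in h1; lra.
  by rewrite /cutf (negbTE h3) ltey.
have [gy gc] := hg y hy.
set b := fine (g y).
have [δ δ0 hδ] : exists2 δ : R, (0 < δ)%R & (a - b + δ + δ)%:E < phi y.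
  move: ha; rewrite -(fineK gy) -/b.
  case: (phi y) => [p||] //=.
  - rewrite -EFinD lte_fin => h; exists ((p + b - a) / 3)%R.
      by rewrite divr_gt0 // subr_gt0.
    rewrite lte_fin; lra.
  - by move=> _; exists 1%R => //; rewrite ltey.
have hlt : (a - b + δ)%:E < phi y by apply: lt_trans hδ; rewrite lte_fin; lra.
have hl := hphi y _ hlt.
rewrite -(fineK gy) -/b in gc.
have [gfin gfc] := (fine_cvgP _ _).1 gc.
near=> z.
have h1 : (a - b + δ)%:E < phi z by near: z.
have h2 : g z \is a fin_num by near: z.
have h3 : (`|b - fine (g z)| < δ)%R.
  near: z; have := @cvgr_dist_lt _ _ _ _ _ _ _ gfc _ δ0.
  by move/(_ (nbhs_filter y)).
rewrite /cutf; case: ifP => _; last by rewrite ltey.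
rewrite -(fineK h2); move: h1; case: (phi z) => [p||] //=; last by move=> _; rewrite addye // ltey.
rewrite -EFinD !lte_fin => h1.
move: h3; rewrite ltr_norml => /andP[h3 h4].
lra.
Unshelve. all: by end_near.
Qed.


Lemma open_normball (c : V) (r : R) : open [set x | (`|x - c| < r)%R].
Proof.
rewrite openE => x /= hx.
apply/nbhs_ballP; exists (r - `|x - c|)%R => /=; first by rewrite subr_gt0.
move=> z; rewrite -ball_normE /= => hz.
have := ler_distD x z c; rewrite (distrC z x); lra.
Qed.

Lemma cut_sub phi g c r (G : V -> V) x v :
  (forall y, (`|y - c| <= r)%R -> g y \is a fin_num /\ diff_at g (G y) y) ->
  {for x, continuous G} -> (`|x - c| < r)%R ->
  (lim_subgrad (cutf phi g c r) x v <-> lim_subgrad phi x (v - G x)%R).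
Proof.
move=> hg hG hx; split.
- have h1 : forall y, (`|y - c| < r)%R -> phi y = cutf phi g c r y + (- g y).
    by move=> y hy; rewrite /cutf (ltW hy) addeK //; case: (hg y (ltW hy)).
  have h2 : forall y, (`|y - c| < r)%R -> (- g y) \is a fin_num.
    by move=> y hy; rewrite fin_numN; case: (hg y (ltW hy)).
  have h3 : forall y, (`|y - c| < r)%R -> diff_at (fun z => - g z) (- G y)%R y.
    by move=> y hy; apply: diff_at_N; case: (hg y (ltW hy)).
  have := (@lim_transfer (cutf phi g c r) phi (fun y => - g y) (fun y => - G y)%R
     [set y | (`|y - c| < r)%R] x v (v - G x)%R (open_normball c r) hx).
  by move=> /(_ h1 h2 h3 (contN hG) erefl).
- have h1 : forall y, (`|y - c| < r)%R -> cutf phi g c r y = phi y + g y.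
    by move=> y hy; rewrite /cutf (ltW hy).
  have h2 : forall y, (`|y - c| < r)%R -> g y \is a fin_num.
    by move=> y hy; case: (hg y (ltW hy)).
  have h3 : forall y, (`|y - c| < r)%R -> diff_at g (G y) y.
    by move=> y hy; case: (hg y (ltW hy)).
  have := (@lim_transfer phi (cutf phi g c r) g G
     [set y | (`|y - c| < r)%R] x (v - G x)%R v (open_normball c r) hx).
  by move=> /(_ h1 h2 h3 hG); rewrite subrK; apply.
Qed.

End Aux.
Arguments diff_at {R n}.
Arguments diff_cont {R n c D y}.
Arguments open_near {R n S y}.
Arguments near_norm {R n}.
Arguments lim_transfer {R n}.
Arguments lim_transfer_neg {R n}.
Arguments convex_lim {R n}.
Arguments inner_bound {R n}.
Arguments ball_convex {R n}.
Arguments cutf {R n}.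
Arguments cut_convex {R n}.
Arguments cut_lsc {R n}.
Arguments cut_sub {R n}.
Arguments open_normball {R n}.

Theorem mainTheorem17 (R : realType) (n : nat)
  (f g : 'rV[R]_n -> \bar R) (xbar vbar : 'rV[R]_n)
  (U : set 'rV[R]_n) (G : 'rV[R]_n -> 'rV[R]_n) :
  proper_fun f -> lsc f -> f xbar \is a fin_num ->
  convex_fun g ->
  open U -> U xbar -> C1_on_with_grad U g G ->
  var_convex f xbar vbar ->
  var_convex (fun x => (f x + g x)%E) xbar (vbar + G xbar).
Proof.
move=> Hprop Hlsc Hfx Hgc HUo HUx [Hgfin [Hgd HGc]]
  [Hsub [U0 [W0 [phi [eps [cU0 [cW0 [nU0 [nW0 [lphi [cphi [phile [eps0 [Hiff Heq]]]]]]]]]]]]]].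
have gd : forall y, U y -> diff_at g (G y) y := Hgd.
have gfinnear : forall y, U y -> \forall z \near y, g z \is a fin_num.
  move=> y Uy; exact: (filterS Hgfin (open_near HUo Uy)).
have gcont : forall y, U y -> g z @[z --> y] --> g y.
  move=> y Uy; exact: (diff_cont (Hgfin y Uy) (gfinnear y Uy) (gd y Uy)).
have E1 : forall x v, U x -> lim_subgrad f x (v - G x) ->
    lim_subgrad (fun x => f x + g x)%E x v.
  move=> x v Ux H.
  have := lim_transfer f (fun x => f x + g x)%E g G U x (v - G x) v HUo Ux.
  by move=> /(_ (fun _ _ => erefl) Hgfin gd (HGc x Ux)); rewrite subrK; apply.
have E1' : forall x v, U x -> lim_subgrad (fun x => f x + g x)%E x v ->
    lim_subgrad f x (v - G x) :=
  fun x v Ux => lim_transfer_neg f g G U x v HUo Ux Hgfin gd (HGc x Ux).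
have U0x : U0 xbar := nbhs_singleton nU0.
have W0v : W0 vbar := nbhs_singleton nW0.
have gxfin := Hgfin xbar HUx.
have flt0 : (f xbar < f xbar + eps%:E)%E.
  by rewrite -(fineK Hfx) -EFinD lte_fin ltrDl.
have [_ [_ Hphi0]] := (Hiff xbar vbar).1 (conj U0x (conj flt0 (conj W0v Hsub))).
have fphi : f xbar = phi xbar := Heq xbar vbar U0x W0v Hphi0.
have phifin : phi xbar \is a fin_num by rewrite -fphi.
have [ρ /= ρ0 Hρ] := (nbhs_ballP _ _).1 nW0.
set K := (n%:R * (`|vbar| + ρ) + 1)%R.
have K0 : (0 < K)%R.
  have : (0 <= n%:R * (`|vbar| + ρ))%R by apply: mulr_ge0 => //; apply: addr_ge0 => //; exact: ltW.
  rewrite /K; lra.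
set d5 := (eps / (4 * K))%R.
have d50 : (0 < d5)%R by rewrite divr_gt0 // mulr_gt0.
have ρ2 : (0 < ρ / 2)%R by rewrite divr_gt0.
have eps4 : (0 < eps / 4)%R by rewrite divr_gt0.
have gc0 := gcont xbar HUx; rewrite -(fineK gxfin) in gc0.
have [_ gfc0] := (fine_cvgP _ _).1 gc0.
have HP : \forall x \near xbar, [/\ U0 x, U x, (`|G x - G xbar| < ρ / 2)%R,
    (`|fine (g x) - fine (g xbar)| < eps / 4)%R & (`|x - xbar| < d5)%R].
  near=> x; split.
  - by near: x.
  - near: x; exact: (open_near HUo HUx).
  - rewrite distrC; near: x.
    have H := @cvgr_dist_lt _ _ _ _ _ _ _ (HGc xbar HUx) _ ρ2.
    first [exact: H | exact: (H (nbhs_filter xbar))].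
  - rewrite distrC; near: x.
    have H := @cvgr_dist_lt _ _ _ _ _ _ _ gfc0 _ eps4.
    first [exact: H | exact: (H (nbhs_filter xbar))].
  - near: x; exact: near_norm.
have [r0 /= r00 Hr0] := (nbhs_ballP _ _).1 HP.
set r := (r0 / 2)%R.
have r0' : (0 < r)%R by rewrite divr_gt0.
have Pr : forall x, (`|x - xbar| <= r)%R -> [/\ U0 x, U x, (`|G x - G xbar| < ρ / 2)%R,
    (`|fine (g x) - fine (g xbar)| < eps / 4)%R & (`|x - xbar| < d5)%R].
  move=> x hx; apply: Hr0; rewrite -ball_normE /= distrC; rewrite /r in hx; lra.
have hgc : forall y, (`|y - xbar| <= r)%R -> g y \is a fin_num /\ diff_at g (G y) y.
  by move=> y /Pr [_ Uy _ _ _]; split; [exact: Hgfin | exact: gd].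
have Bw : forall x v, (`|x - xbar| <= r)%R -> (`|v - (vbar + G xbar)| < ρ / 2)%R ->
    (`|vbar - (v - G x)| < ρ)%R.
  move=> x v /Pr [_ _ hG _ _] hv.
  have -> : (vbar - (v - G x) = - (v - (vbar + G xbar)) + (G x - G xbar))%R.
    by apply/rowP => i; rewrite !mxE; ring.
  apply: le_lt_trans (ler_normD _ _) _; rewrite normrN; lra.
have W0w : forall x v, (`|x - xbar| <= r)%R -> (`|v - (vbar + G xbar)| < ρ / 2)%R ->
    W0 (v - G x).
  by move=> x v hx hv; apply: Hρ; rewrite -ball_normE /=; exact: Bw.
split.
  by apply: E1 HUx _; rewrite addrK.
exists [set x | (`|x - xbar| < r)%R], [set v | (`|v - (vbar + G xbar)| < ρ / 2)%R],
  (cutf phi g xbar r), (eps / 2)%R.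
split; first exact: ball_convex.
split; first exact: ball_convex.
split; first exact: near_norm.
split; first exact: near_norm.
split.
  apply: (cut_lsc phi g xbar r lphi) => y hy.
  have [gy _] := hgc y hy; have [_ Uy _ _ _] := Pr y hy.
  by split; [|exact: gcont].
split; first exact: cut_convex.
split.
  move=> x /= hx; have [U0x' _ _ _ _] := Pr x (ltW hx).
  rewrite /cutf (ltW hx); apply: leeD2r; exact: phile.
split; first by rewrite divr_gt0.
split.
  move=> x v; split.
  - move=> [/= hx [hlt [/= hv hs]]].
    have [U0x' Ux hG hg hx5] := Pr x (ltW hx).
    have hf := E1' x v Ux hs.
    have W0x := W0w x v (ltW hx) hv.
    have fxfin : f x \is a fin_num by case: hf.
    have gxf := Hgfin x Ux.
    have flt : (f x < f xbar + eps%:E)%E.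
      move: hlt; rewrite -(fineK fxfin) -(fineK gxf) -(fineK Hfx) -(fineK gxfin).
      rewrite -!EFinD !lte_fin.
      move: hg; rewrite ltr_norml => /andP[? ?]; lra.
    have [_ [_ hphi]] := (Hiff x (v - G x)).1 (conj U0x' (conj flt (conj W0x hf))).
    split => //; split => //.
    exact: (cut_sub phi g xbar r G x v hgc (HGc x Ux) hx).2.
  - move=> [/= hx [/= hv hs]].
    have [U0x' Ux hG hg hx5] := Pr x (ltW hx).
    have hphi := (cut_sub phi g xbar r G x v hgc (HGc x Ux) hx).1 hs.
    have W0x := W0w x v (ltW hx) hv.
    have [_ [flt [_ hf]]] := (Hiff x (v - G x)).2 (conj U0x' (conj W0x hphi)).
    split => //; split; last by split => //; exact: E1.
    have fphix : f x = phi x := Heq x (v - G x) U0x' W0x hphi.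
    have phixfin : phi x \is a fin_num by case: hphi.
    have gxf := Hgfin x Ux.
    have ineq := convex_lim phi x xbar (v - G x) cphi hphi phifin.
    have hb := inner_bound (v - G x) (xbar - x).
    have hB := Bw x v (ltW hx) hv.
    have hw : (`|v - G x| <= `|vbar| + ρ)%R.
      have e : (v - G x = vbar - (vbar - (v - G x)))%R.
        by rewrite opprB addrCA subrr addr0.
      rewrite {1}e; apply: le_trans (ler_normB _ _) _; lra.
    have hxx : `|xbar - x| = `|x - xbar| by rewrite distrC.
    have s1 : (`|v - G x| * `|xbar - x| <= (`|vbar| + ρ) * d5)%R.
      by apply: ler_pM => //; rewrite hxx ltW.
    have s2 : (n%:R * (`|v - G x| * `|xbar - x|) <= n%:R * ((`|vbar| + ρ) * d5))%R.
      by apply: ler_wpM2l.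
    have s3 : (K * d5 = eps / 4)%R.
      by rewrite /d5 /K; field; rewrite -/K; apply/negP => /eqP K00; rewrite K00 ltxx in K0.
    have hprod : (n%:R * (`|v - G x| * `|xbar - x|) <= eps / 4)%R.
      rewrite -s3 /K mulrDl mul1r; rewrite mulrA in s2; lra.
    have hi := le_trans hb hprod.
    move: hi; rewrite ler_norml => /andP[hi1 hi2].
    move: hg; rewrite ltr_norml => /andP[hg1 hg2].
    rewrite fphix fphi -(fineK phixfin) -(fineK gxf) -(fineK phifin) -(fineK gxfin).
    rewrite -!EFinD lte_fin; lra.
move=> x v /= hx hv hs.
have [U0x' Ux _ _ _] := Pr x (ltW hx).
have hphi := (cut_sub phi g xbar r G x v hgc (HGc x Ux) hx).1 hs.
have W0x := W0w x v (ltW hx) hv.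
by rewrite /cutf (ltW hx) (Heq x (v - G x) U0x' W0x hphi).
Unshelve. all: by end_near.
Qed.
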